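(* Let $\bm{Z}$ be a $p\times q$ matrix with rows $\bm{z}_1^T,\ldots,\bm{z}_p^T$, and let $\bm{U}$ be the submatrix consisting of the distinct rows of $\bm{Z}$; suppose $\bm{U}$ has $q$ rows and rank $q$. Let $m_j(\bm{\omega})=1/(1+e^{-\bm{z}_j^T\bm{\omega}})$, let $\bm{\omega}\sim N(\mathbf0,g(\bm{Z}^T\bm{Z}/p)^{-1})$ with $g>0$ (prior density $\pi(\bm{\omega})$), and let $f(\bm{\omega})=\sum_{\bm{\gamma}\in\{0,1\}^p}\pi(\bm{\gamma}\mid\bm{y},\bm{\omega}')\log\pi(\bm{\gamma}\mid\bm{\omega})$ with $\pi(\bm{\gamma}\mid\bm{\omega})=\prod_j\mathrm{Bern}(\gamma_j;m_j(\bm{\omega}))$ and a fixed posterior $\pi(\bm{\gamma}\mid\bm{y},\bm{\omega}')$ with inclusion probabilities $\hat\pi_i=\pi(\gamma_i=1\mid\bm{y},\bm{\omega}')$. Let $\tilde{\bm{Z}}=\bm{Z}\bm{U}^{-1}$ with entries $\tilde z_{ij}$, let $a_j=\sum_{i=1}^p\tilde z_{ij}\hat\pi_i\big/\sum_{i=1}^p\tilde z_{ij}$, and let $h(a,c)$ denote the solution $w$ of $1/(1+e^{-w})+w/c=a$. Define $\tilde\omega_j=h(a_j,gp)$ for $j=1,\ldots,q$ and $\hat{\bm{\omega}}=\bm{U}^{-1}\tilde{\bm{\omega}}$. Then $\nabla_{\bm{\omega}}f(\hat{\bm{\omega}})+\nabla_{\bm{\omega}}\log\pi(\hat{\bm{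\omega}})=\mathbf0$.
   Context: $\pi(\bm{\gamma}\mid\bm{y},\bm{\omega}')\propto p(\bm{y}\mid\bm{\gamma})\pi(\bm{\gamma}\mid\bm{\omega}')$ is the posterior over models at the current EM iterate $\bm{\omega}'$; $f$ plus $\log\pi(\bm{\omega})$ is the M-step objective. *)

(* Defs.v *)
From HB Require Import structures.
From mathcomp Require Import all_boot all_order all_algebra.
From mathcomp Require Import all_classical all_reals all_analysis.
Set Implicit Arguments. Unset Strict Implicit. Unset Printing Implicit Defensive.
Import Order.TTheory GRing.Theory Num.Theory.
Import numFieldNormedType.Exports.
Local Open Scope ring_scope.

Section Defs.
Variable R : realType.

Definition logistic (w : R) : R := 1 / (1 + expR (- w)).

Definition mprob (p q : nat) (Z : 'M[R]_(p, q)) (omega : 'cV[R]_q) (j : 'I_p) : R :=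
  logistic ((row j Z *m omega) 0 0).

Definition bern (b : bool) (x : R) : R := if b then x else 1 - x.

Definition prior_gamma (p q : nat) (Z : 'M[R]_(p, q)) (omega : 'cV[R]_q)
  (gamma : {ffun 'I_p -> bool}) : R :=
  \prod_(j < p) bern (gamma j) (mprob Z omega j).

(* pi(gamma | y, omega') ∝ p(y | gamma) pi(gamma | omega'), lik gamma = p(y|gamma) *)
Definition posterior (p q : nat) (Z : 'M[R]_(p, q)) (lik : {ffun 'I_p -> bool} -> R)
  (omega' : 'cV[R]_q) (gamma : {ffun 'I_p -> bool}) : R :=
  lik gamma * prior_gamma Z omega' gamma /
  \sum_(delta : {ffun 'I_p -> bool}) lik delta * prior_gamma Z omega' delta.

Definition pihat (p q : nat) (Z : 'M[R]_(p, q)) (lik : {ffun 'I_p -> bool} -> R)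
  (omega' : 'cV[R]_q) (i : 'I_p) : R :=
  \sum_(gamma : {ffun 'I_p -> bool} | gamma i) posterior Z lik omega' gamma.

Definition fobj (p q : nat) (Z : 'M[R]_(p, q)) (lik : {ffun 'I_p -> bool} -> R)
  (omega' : 'cV[R]_q) (omega : 'cV[R]_q) : R :=
  \sum_(gamma : {ffun 'I_p -> bool})
     posterior Z lik omega' gamma * ln (prior_gamma Z omega gamma).

Definition mvn0_pdf (q : nat) (Sigma : 'M[R]_q) (x : 'cV[R]_q) : R :=
  (Num.sqrt ((2 * pi) ^+ q * \det Sigma))^-1 *
  expR (- (1 / 2) * ((x^T *m invmx Sigma *m x) 0 0)).

Definition prior_cov (p q : nat) (Z : 'M[R]_(p, q)) (g : R) : 'M[R]_q :=
  g *: invmx ((p%:R)^-1 *: (Z^T *m Z)).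

Definition prior_omega (p q : nat) (Z : 'M[R]_(p, q)) (g : R) (omega : 'cV[R]_q) : R :=
  mvn0_pdf (prior_cov Z g) omega.

Definition mstep_obj (p q : nat) (Z : 'M[R]_(p, q)) (g : R)
  (lik : {ffun 'I_p -> bool} -> R) (omega' : 'cV[R]_q) (omega : 'cV[R]_q) : R :=
  fobj Z lik omega' omega + ln (prior_omega Z g omega).

(* U is "the submatrix of distinct rows of Z" (in some order): its rows are
   pairwise distinct, every row of U is a row of Z and every row of Z is a row of U *)
Definition distinct_rows_of (p q : nat) (Z : 'M[R]_(p, q)) (U : 'M[R]_q) : Prop :=
  injective (fun k : 'I_q => row k U) /\
  (forall k : 'I_q, exists i : 'I_p, row i Z = row k U) /\
  (forall i : 'I_p, exists k : 'I_q, row i Z = row k U).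

Definition acoef (p q : nat) (Z : 'M[R]_(p, q)) (U : 'M[R]_q)
  (lik : {ffun 'I_p -> bool} -> R) (omega' : 'cV[R]_q) (j : 'I_q) : R :=
  (\sum_(i < p) (Z *m invmx U) i j * pihat Z lik omega' i) /
  (\sum_(i < p) (Z *m invmx U) i j).

End Defs.

(* Main.v *)
Require Import Defs.
From HB Require Import structures.
From mathcomp Require Import all_boot all_order all_algebra.
From mathcomp Require Import all_classical all_reals all_analysis.
From mathcomp Require Import ring lra.
Import Order.TTheory GRing.Theory Num.Theory.
Import numFieldNormedType.Exports.
Local Open Scope ring_scope.

Section Helpers.
Set Implicit Arguments.
Variable R : realType.

Lemma pp_dext (f g : R -> R) (x df : R) : (forall t, f t = g t) ->
  is_derive x 1 f df -> is_derive x 1 g df.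
Proof. by move=> fg; have -> : g = f by apply/funext=> t; rewrite fg. Qed.

Lemma pp_dadd (f g : R -> R) (x a b : R) : is_derive x 1 f a -> is_derive x 1 g b ->
  is_derive x 1 (fun t => f t + g t) (a + b).
Proof. move=> ??; exact: is_deriveD. Qed.

Lemma pp_dscal (f : R -> R) (x c a : R) : is_derive x 1 f a ->
  is_derive x 1 (fun t => c * f t) (c * a).
Proof. move=> ?; exact: is_deriveZ. Qed.

Lemma pp_dcst (x c : R) : is_derive x 1 (fun _ : R => c) 0.
Proof. exact: is_derive_cst. Qed.

Lemma pp_dsum (I : Type) (r : seq I) (P : pred I) (F : I -> R -> R) (dF : I -> R) (x : R) :
  (forall i, P i -> is_derive x 1 (F i) (dF i)) ->
  is_derive x 1 (fun t => \sum_(i <- r | P i) F i t) (\sum_(i <- r | P i) dF i).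
Proof.
move=> H; elim: r => [|a r IH].
  rewrite big_nil; apply: pp_dext (pp_dcst x 0) => t; by rewrite big_nil.
rewrite big_cons; case Pa: (P a).
  apply: pp_dext (pp_dadd (H a Pa) IH) => t; by rewrite big_cons Pa.
by apply: pp_dext IH => t; rewrite big_cons Pa.
Qed.

Lemma pp_dln (f : R -> R) (x a : R) : 0 < f x -> is_derive x 1 f a ->
  is_derive x 1 (fun t => ln (f t)) ((f x)^-1 * a).
Proof.
move=> fx df; have := is_derive1_ln fx => dl.
exact: (is_derive1_comp dl df).
Qed.

Lemma pp_dcomp (f g : R -> R) (x a b : R) : is_derive (g x) 1 f a -> is_derive x 1 g b ->
  is_derive x 1 (fun t => f (g t)) (a * b).
Proof. move=> ??; exact: is_derive1_comp. Qed.

Lemma pp_dlin (x c s : R) : is_derive x 1 (fun t => t * c + s) c.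
Proof.
have h1 : is_derive x 1 (fun t : R => c * t) (c * 1) by apply: pp_dscal; exact: is_derive_id.
apply: pp_dext (is_derive_eq (pp_dadd h1 (pp_dcst x s)) _) => [t|]; first by rewrite mulrC.
by rewrite mulr1 addr0.
Qed.

Lemma expN_pos (w : R) : 0 < 1 + expR (- w).
Proof. by rewrite addr_gt0 ?expR_gt0. Qed.

Lemma logistic_gt0 (w : R) : 0 < logistic w.
Proof. by rewrite /logistic divr_gt0 ?expN_pos. Qed.

Lemma logistic_compl (w : R) : 1 - logistic w = expR (- w) / (1 + expR (- w)).
Proof.
rewrite /logistic; have := expN_pos w; rewrite lt0r => /andP[h _].
by field.
Qed.

Lemma logistic_lt1 (w : R) : 0 < 1 - logistic w.
Proof. by rewrite logistic_compl divr_gt0 ?expR_gt0 ?expN_pos. Qed.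

Lemma pp_dlogistic (w : R) : is_derive w 1 (@logistic R) (logistic w * (1 - logistic w)).
Proof.
have hN : is_derive w 1 (fun t : R => - t) (- 1) by exact: is_deriveNid.
have he := pp_dcomp (is_derive_expR (- w)) hN.
have hu := pp_dadd (pp_dcst w 1) he.
have u0 : (1 + expR (- w)) != 0 by rewrite gt_eqF ?expN_pos.
have hv := @is_deriveV R (fun t => 1 + expR (- t)) w _ 1 u0 hu.
apply: pp_dext (is_derive_eq hv _) => [t|]; first by rewrite /logistic div1r.
rewrite logistic_compl /logistic; rewrite /GRing.scale /=. field; done.
Qed.

Lemma pp_dlb (b : bool) (f : R -> R) (x d : R) : is_derive x 1 f d ->
  is_derive x 1 (fun t => ln (bern b (logistic (f t)))) ((b%:R - logistic (f x)) * d).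
Proof.
move=> df; have hl := pp_dcomp (pp_dlogistic (f x)) df.
case: b => /=.
  have := @pp_dln (fun t => logistic (f t)) x _ (logistic_gt0 (f x)) hl => H.
  apply: is_derive_eq H _; have := logistic_gt0 (f x); rewrite lt0r => /andP[h _].
  by field.
have hm : is_derive x 1 (fun t => 1 - logistic (f t)) (0 - logistic (f x) * (1 - logistic (f x)) * d).
  apply: pp_dext (is_deriveB (pp_dcst x 1) hl) => t //.
have := @pp_dln (fun t => 1 - logistic (f t)) x _ (logistic_lt1 (f x)) hm => H.
apply: is_derive_eq H _; have := logistic_lt1 (f x); rewrite lt0r => /andP[h _].
by field.
Qed.

Lemma pp_dirderiv (q : nat) (f : 'cV[R]_q -> R) x v df :
  is_derive (0:R) 1 (fun h : R => f (h *: v + x)) df -> is_derive x v f df.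
Proof.
move=> [d1 e1]; apply: DeriveDef; first by apply/derivable1P.
rewrite -e1 /derive; do 2 f_equal.
by apply/funext => h /=; rewrite addr0 scale0r add0r [_%:A]mulr1.
Qed.

End Helpers.

Lemma ln_prod (R : realType) (I : Type) (r : seq I) (P : pred I) (F : I -> R) :
  (forall i, P i -> 0 < F i) ->
  ln (\prod_(i <- r | P i) F i) = \sum_(i <- r | P i) ln (F i).
Proof.
move=> H; elim: r => [|a r IH]; first by rewrite !big_nil ln1.
rewrite !big_cons; case Pa: (P a) => //.
by rewrite lnM ?IH // qualifE /= ?H // prodr_gt0.
Qed.

Lemma pp_dsq (R : realType) (f : R -> R) (x a : R) : is_derive x 1 f a ->
  is_derive x 1 (fun t => f t ^+ 2) (2%:R * f x * a).
Proof.
move=> df; have H := is_deriveX 2 df.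
have H2 : is_derive x 1 (f ^+ 2) (2%:R * f x * a) by apply: is_derive_eq H _; rewrite expr1.
by apply: (pp_dext _ _ H2) => t; rewrite /= expr2.
Qed.

Arguments pp_dsq {R f x a}.

Theorem proposition1 (R : realType) (p q : nat) (Z : 'M[R]_(p, q)) (U : 'M[R]_q)
  (g : R) (lik : {ffun 'I_p -> bool} -> R) (omega' : 'cV[R]_q)
  (h : R -> R -> R) :
  distinct_rows_of Z U ->
  \rank U = q ->
  0 < g ->
  (forall gamma, 0 <= lik gamma) ->
  (exists gamma, 0 < lik gamma) ->
  (forall a c : R, 0 < c -> logistic (h a c) + h a c / c = a) ->
  let omega_tilde : 'cV[R]_q :=
    \col_(j < q) h (acoef Z U lik omega' j) (g * p%:R) in
  let omega_hat : 'cV[R]_q := invmx U *m omega_tilde in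
  forall k : 'I_q,
    is_derive omega_hat (delta_mx k 0 : 'cV[R]_q) (mstep_obj Z g lik omega') 0.
Proof.
move=> [Uinj [Hex Hall]] rkU g0 lik0 [γ0 likpos] hP ωt ωh k.
have Uu : U \in unitmx by rewrite -row_free_unit /row_free rkU.
set W := Z *m invmx U.
pose κ i := odflt k [pick j | row i Z == row j U].
have κP i : row i Z = row (κ i) U.
  rewrite /κ; case: pickP => [j /eqP //|H].
  by case: (Hall i) => j Hj; move: (H j); rewrite Hj eqxx.
have WE i l : W i l = (κ i == l)%:R.
  have : row i W = row (κ i) 1%:M by rewrite /W row_mul κP -row_mul mulmxV.
  by move/(congr1 (fun M : 'rV[R]_q => M 0 l)); rewrite !mxE.
have ZE : W *m U = Z by rewrite /W mulmxKV.
have p0 : (0 < p)%N by case: (Hex k) => i _; exact: (leq_ltn_trans (leq0n i) (ltn_ord i)).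
have gp0 : 0 < g * p%:R by rewrite mulr_gt0 // ltr0n.
have κinj i j : row i Z = row j U -> κ i = j.
  by move=> H; apply: Uinj; rewrite /= -κP H.
have Nj j : 0 < \sum_(i < p) W i j.
  case: (Hex j) => i Hi; rewrite (bigD1 i) //= WE (κinj _ _ Hi) eqxx mulr1n.
  have : 0 <= \sum_(l < p | l != i) W l j by apply: sumr_ge0 => l _; rewrite WE ler0n.
  lra.
have sE i : (Z *m ωh) i 0 = ωt (κ i) 0.
  rewrite /ωh mulmxA -/W mxE (bigD1 (κ i)) //= big1 => [|l /negPf li].
    by rewrite WE eqxx mul1r addr0.
  by rewrite WE eq_sym li mul0r.
have hE j : logistic (ωt j 0) + ωt j 0 / (g * p%:R) = acoef Z U lik omega' j.
  by rewrite /ωt mxE hP.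

set P := posterior Z lik omega'.
set pih := pihat Z lik omega'.
set a := acoef Z U lik omega'.
have key : \sum_(i < p) Z i k * (pih i - (logistic ((Z *m ωh) i 0) + (Z *m ωh) i 0 / (g * p%:R))) = 0.
  under eq_bigr => i _ do rewrite sE hE -{1}ZE mxE mulr_suml.
  rewrite exchange_big /= big1 // => j _.
  transitivity (U j k * (\sum_(i < p) W i j * pih i - a j * \sum_(i < p) W i j)).
    rewrite [a j * _]mulr_sumr -sumrB mulr_sumr; apply: eq_bigr => i _.
    rewrite WE /a; case: eqP => [->|_]; rewrite ?mulr1n ?mulr0n; ring.
  by rewrite /a /acoef -/W mulrC divfK ?subrr ?mul0r // lt0r_neq0.

clearbody W.
have Pg ω γ : 0 < prior_gamma Z ω γ.
  by apply: prodr_gt0 => i _; case: (γ i); rewrite /= ?logistic_gt0 ?logistic_lt1.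
have D0 : 0 < \sum_δ lik δ * prior_gamma Z omega' δ.
  rewrite (bigD1 γ0) //=.
  have : 0 <= \sum_(δ | δ != γ0) lik δ * prior_gamma Z omega' δ.
    by apply: sumr_ge0 => δ _; rewrite mulr_ge0 // ltW.
  have := mulr_gt0 likpos (Pg omega' γ0); lra.
have Psum : \sum_γ P γ = 1.
  by rewrite /P /posterior -mulr_suml divff // lt0r_neq0.
have pihatE i : \sum_γ P γ * (γ i)%:R = pih i.
  rewrite /pih /pihat [RHS]big_mkcond /=; apply: eq_bigr => γ _.
  by case: (γ i); rewrite ?mulr1 ?mulr0.
set M := (p%:R)^-1 *: (Z^T *m Z).
have detZZ : 0 < \det (Z^T *m Z).
  have WW : W^T *m W = diag_mx (\row_j \sum_(i < p) W i j).
    apply/matrixP => j l; rewrite !mxE.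
    case: (eqVneq j l) => [<-|jl].
      rewrite mulr1n; apply: eq_bigr => i _; rewrite !mxE WE.
      by case: eqP; rewrite ?mulr1n ?mulr0n ?mulr1 ?mulr0.
    rewrite mulr0n big1 // => i _; rewrite !mxE !WE.
    case: (eqVneq (κ i) j) => [e|ne]; last by rewrite mulr0n mul0r.
    by rewrite e (negPf jl) mulr0n mulr0.
  have -> : Z^T *m Z = U^T *m (W^T *m W) *m U by rewrite -ZE trmx_mul !mulmxA.
  rewrite !det_mulmx det_tr WW det_diag.
  have dU : \det U != 0 by rewrite -unitfE -unitmxE.
  have hP2 : 0 < \prod_j (\row_j0 \sum_(i < p) W i j0) 0 j.
    by apply: prodr_gt0 => j _; rewrite mxE.
  have hU2 : 0 < \det U * \det U by rewrite lt0r mulf_neq0 //= -expr2 sqr_ge0.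
  by rewrite mulrAC mulr_gt0.
have detM : 0 < \det M by rewrite detZ mulr_gt0 // exprn_gt0 // invr_gt0 ltr0n.
have Mu : M \in unitmx by rewrite unitmxE unitfE lt0r_neq0.
have detS : 0 < \det (prior_cov Z g).
  by rewrite /prior_cov -/M detZ det_inv mulr_gt0 ?exprn_gt0 ?invr_gt0.
have Sinv : invmx (prior_cov Z g) = (g * p%:R)^-1 *: (Z^T *m Z).
  rewrite /prior_cov -/M invmxZ ?invmxK; last by rewrite unitmxE unitfE lt0r_neq0 // -/M.
  by rewrite /M scalerA invfM.
set C := (Num.sqrt ((2 * pi) ^+ q * \det (prior_cov Z g)))^-1.
have C0 : 0 < C by rewrite invr_gt0 sqrtr_gt0 mulr_gt0 // exprn_gt0 // mulr_gt0 // pi_gt0.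
set e := (delta_mx k 0 : 'cV[R]_q).
have lin t i : (Z *m (t *: e + ωh)) i 0 = t * Z i k + (Z *m ωh) i 0.
  by rewrite mulmxDr -scalemxAr -colE mxE; congr (_ + _); rewrite !mxE.
have rowlin t i : (row i Z *m (t *: e + ωh)) 0 0 = t * Z i k + (Z *m ωh) i 0.
  by rewrite -row_mul mxE lin.

have phiE t : mstep_obj Z g lik omega' (t *: e + ωh) =
   \sum_γ P γ * \sum_(i < p) ln (bern (γ i) (logistic (t * Z i k + (Z *m ωh) i 0)))
   + (ln C + (- (1/2)) * ((g * p%:R)^-1 * \sum_(i < p) (t * Z i k + (Z *m ωh) i 0) ^+ 2)).
  rewrite /mstep_obj /fobj; congr (_ + _).
    apply: eq_bigr => γ _; congr (_ * _).
    rewrite /prior_gamma ln_prod; last by move=> i _; case: (γ i); rewrite /= ?logistic_gt0 ?logistic_lt1.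
    by apply: eq_bigr => i _; rewrite /mprob rowlin.
  rewrite /prior_omega /mvn0_pdf -/C lnM ?expRK ?qualifE /= ?expR_gt0 //.
  congr (_ + _); congr (_ * _).
  rewrite Sinv -scalemxAr -scalemxAl mxE; congr (_ * _).
  rewrite mulmxA -trmx_mul -mulmxA mxE; apply: eq_bigr => i _.
  by rewrite mxE lin expr2.

apply: pp_dirderiv.
set s := fun i => (Z *m ωh) i 0.
have d1 : is_derive (0:R) 1
   (fun t => \sum_γ P γ * \sum_(i < p) ln (bern (γ i) (logistic (t * Z i k + s i))))
   (\sum_γ P γ * \sum_(i < p) (((γ i)%:R - logistic (0 * Z i k + s i)) * Z i k) : R).
  apply: pp_dsum => γ _; apply: pp_dscal; apply: pp_dsum => i _.
  exact: (pp_dlb (γ i) (@pp_dlin R 0 (Z i k) (s i))).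
have d2 : is_derive (0:R) 1
   (fun t => ln C + (- (1/2)) * ((g * p%:R)^-1 * \sum_(i < p) (t * Z i k + s i) ^+ 2))
   ((0:R) + (- (1/2)) * ((g * p%:R)^-1 * \sum_(i < p) (2%:R * (0 * Z i k + s i) * Z i k)) : R).
  have dq : is_derive (0:R) 1 (fun t => \sum_(i < p) (t * Z i k + s i) ^+ 2)
     (\sum_(i < p) (2%:R * (0 * Z i k + s i) * Z i k) : R).
    by apply: pp_dsum => i _; exact: (pp_dsq (@pp_dlin R 0 (Z i k) (s i))).
  exact: (pp_dadd (@pp_dcst R 0 (ln C)) (pp_dscal (- (1/2)) (pp_dscal (g * p%:R)^-1 dq))).
apply: (pp_dext _ _ (is_derive_eq (pp_dadd d1 d2) _)) => [t|]; first by rewrite phiE.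
rewrite /s.
have E0 : forall x y : R, 0 * x + y = y by move=> x y; ring.
have T1 : \sum_γ P γ * \sum_(i < p) ((γ i)%:R - logistic (0 * Z i k + (Z *m ωh) i 0)) * Z i k
    = \sum_(i < p) Z i k * (pih i - logistic ((Z *m ωh) i 0)).
  under eq_bigr => γ _ do rewrite mulr_sumr.
  rewrite exchange_big /=; apply: eq_bigr => i _.
  rewrite E0 -pihatE.
  transitivity (Z i k * (\sum_γ P γ * (γ i)%:R - logistic ((Z *m ωh) i 0) * \sum_γ P γ)); last by rewrite Psum mulr1.
  rewrite [logistic _ * _]mulr_sumr -sumrB mulr_sumr; apply: eq_bigr => γ _; ring.
have H0 : forall x y : R, x + (0 + y) = x + y by move=> x y; ring.
apply: (eq_trans _ key).
rewrite T1 add0r mulr_sumr mulr_sumr -big_split /=; apply: eq_bigr => i _.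
rewrite E0; field.
by rewrite pnatr_eq0 -lt0n p0 lt0r_neq0.
Qed.
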